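(* Let $p\in(0,1)$, $d\ge2$ an integer, and fix $r_1,r_2\in\mathbb{R}$ with $r_2-r_1>0$. With $x_i=\big[-\kappa^2\frac{2}{d-1}r_it^{2/3}-\kappa s_it^{1/3}\big]$ and $n_i=\big[\frac{p(d-1)}{d(d-p)}t+\kappa^2\frac{2}{d(d-1)}r_it^{2/3}\big]$, there is a constant $C_1$ independent of $t$ such that for any $s_1,s_2\in\mathbb{R}$ the bound $$\kappa t^{1/3}\Big(\frac{d}{d-1}\Big)^{x_2+dn_2-(x_1+dn_1)}\Big(\frac{d^d}{(d-1)^{d-1}}\Big)^{n_1-n_2}\binom{x_1-x_2-1}{n_2-n_1-1}\le C_1e^{-|s_2-s_1|}$$ holds for $t$ large enough.
   Context: $\kappa=\frac{(2(1-p)p)^{1/3}(d(d-1))^{2/3}}{d-p}$; $[\cdot]$ is the integer part; $\binom{a}{b}=\frac{a!}{b!(a-b)!}$ for $0\le b\le a$ and $0$ otherwise. *)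

(* Defs.v *)
From mathcomp Require Import all_boot all_order all_algebra.
From mathcomp Require Import reals sequences exp.
Set Implicit Arguments. Unset Strict Implicit. Unset Printing Implicit Defensive.
Import Order.TTheory GRing.Theory Num.Theory.
Local Open Scope ring_scope.

Definition binz (a b : int) : nat :=
  if (0 <= b) && (b <= a) then 'C(`|a|%N, `|b|%N) else 0%N.

Section Defs.
Variable R : realType.
Variables (p d : R).

Definition kappa : R :=
  powR (2 * (1 - p) * p) (1 / 3) * powR (d * (d - 1)) (2 / 3) / (d - p).

Definition xi (r s t : R) : int :=
  Num.floor (- kappa ^+ 2 * (2 / (d - 1)) * r * powR t (2 / 3)
             - kappa * s * powR t (1 / 3)).

Definition ni (r t : R) : int :=
  Num.floor (p * (d - 1) / (d * (d - p)) * t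
             + kappa ^+ 2 * (2 / (d * (d - 1))) * r * powR t (2 / 3)).
End Defs.

(* Main.v *)
Require Import Defs.
From mathcomp Require Import all_boot all_order all_algebra.
From mathcomp Require Import reals sequences exp.
From mathcomp Require Import ring lra.
Set Implicit Arguments. Unset Strict Implicit. Unset Printing Implicit Defensive.
Import Order.TTheory GRing.Theory Num.Theory.
Local Open Scope ring_scope.


Section B.
Variable R : realType.
Implicit Types p : R.

Definition bp p n k : R := 'C(n,k)%:R * p^+k * (1-p)^+(n-k).

Lemma bp_ge0 p n k : 0 <= p <= 1 -> 0 <= bp p n k.
Proof.
case/andP=> p0 p1; rewrite /bp; apply: mulr_ge0; [apply: mulr_ge0|] => //.
- exact: exprn_ge0.
- by apply: exprn_ge0; rewrite subr_ge0.
Qed.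

Lemma bp_sum p n : \sum_(i < n.+1) bp p n i = 1.
Proof.
have := exprDn (1-p) p n; rewrite subrK expr1n => ->.
apply: eq_bigr => i _; rewrite /bp -mulr_natl; ring.
Qed.

Lemma bp_rec p n k : (k < n)%N ->
  bp p n k.+1 * (k.+1%:R * (1-p)) = bp p n k * ((n-k)%:R * p).
Proof.
move=> kn; rewrite /bp.
have e1 : (k.+1 * 'C(n, k.+1))%N = ((n - k) * 'C(n, k))%N by rewrite mul_bin_left.
have e2 : (n - k = (n - k.+1).+1)%N by rewrite subnSK.
rewrite e2 !exprS.
have : (k.+1%:R * 'C(n, k.+1)%:R : R) = (n - k)%:R * 'C(n, k)%:R.
  by rewrite -!natrM e1.
rewrite e2 => h.
transitivity (((k.+1)%:R * 'C(n, k.+1)%:R) * p ^+ k * (1 - p) ^+ (n - k.+1) * p * (1 - p)); first by ring.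
rewrite h; ring.
Qed.

Lemma bp_sym p n k : (k <= n)%N -> bp p n k = bp (1-p) n (n-k).
Proof.
move=> kn; rewrite /bp bin_sub // subKn //.
have -> : 1 - (1 - p) = p by ring.
ring.
Qed.

Lemma bp_small p n k : (n < k)%N -> bp p n k = 0.
Proof. by move=> h; rewrite /bp bin_small // mul0r mul0r. Qed.

Lemma key1 (n p K j : R) : 
  0 <= n * p - K -> 0 <= p -> 0 <= 1 - p -> 0 <= j -> j + 1 <= n * p * (1 - p) ->
  (n * p * (1 - p) - (j + 1)) * ((K + j + 1) * (1 - p)) <= (n - (K + j)) * p * (n * p * (1 - p)).
Proof.
set q := 1 - p; set A := n * p * q => h1 hp hq hj hA.
have e : (n - (K + j)) * p * A - (A - (j + 1)) * ((K + j + 1) * q)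
  = (n * p - K) * (A * p + (A - j - 1) * q) + A * p + (j+1)^+2 * q.
  by rewrite /A /q; ring.
rewrite -subr_ge0 e.
have hA0 : 0 <= A by apply: le_trans hA; lra.
have hA1 : 0 <= A - j - 1 by lra.
apply: addr_ge0; [apply: addr_ge0|].
- by apply: mulr_ge0 => //; apply: addr_ge0; apply: mulr_ge0.
- exact: mulr_ge0.
- by apply: mulr_ge0 => //; apply: exprn_ge0; lra.
Qed.

Lemma bp_window p n k w : 0 < p < 1 -> k%:R <= n%:R * p ->
  (w.+1)%:R <= n%:R * (1-p) -> (w * w.+1)%:R <= n%:R * p * (1-p) ->
  bp p n k <= 2 / (w.+1)%:R.
Proof.
case/andP=> p0 p1 hk hw1 hww.
set A := n%:R * p * (1-p).
have hq : 0 < 1 - p by lra.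
have n0 : 0 < n%:R :> R.
  have : 1 <= n%:R * (1 - p) by apply: le_trans hw1; rewrite ler1n.
  move=> h; rewrite lt0r ?ler0n andbT; apply/negP => /eqP e; move: h; rewrite e mul0r; lra.
have A0 : 0 < A by rewrite /A; apply: mulr_gt0 => //; apply: mulr_gt0.
have bge := @bp_ge0 p n.
have p01 : 0 <= p <= 1 by apply/andP; split; lra.
have claim : forall j, (j <= w)%N ->
    bp p n k * (2 * A - (j * j.+1)%:R) <= bp p n (k + j) * (2 * A).
  elim=> [|j IH] hj.
    by rewrite addn0 mul0n subr0.
  have hjw : (j <= w)%N by apply: ltnW.
  have {}IH := IH hjw.
  have hkj : (k + j < n)%N.
    rewrite -(ltr_nat R) natrD.
    have : (j%:R : R) < w.+1%:R by rewrite ltr_nat ltnS.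
    move: hk hw1; rewrite -[n%:R in X in _ -> _ -> X]mulr1 -{3}(addrNK p 1) mulrDr.
    lra.
  have hj1 : (j.+1%:R : R) <= A.
    apply: le_trans hww; rewrite ler_nat; apply: leq_trans hj _; exact: leq_pmulr.
  have step : bp p n (k + j) * (A - j.+1%:R) <= bp p n (k + j).+1 * A.
    have pos : 0 < (k + j).+1%:R * (1 - p) by apply: mulr_gt0.
    rewrite -(ler_pM2r pos).
    have -> : bp p n (k + j).+1 * A * ((k + j).+1%:R * (1 - p)) =
       (bp p n (k + j).+1 * ((k + j).+1%:R * (1 - p))) * A by ring.
    rewrite bp_rec // -[X in X <= _]mulrA -[X in _ <= X]mulrA.
    apply: ler_wpM2l; first exact: (bge _ p01).
    rewrite mulrA.
    have := @key1 n%:R p k%:R j%:R.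
    rewrite natrB ?(ltnW hkj) // !natrD -!addrA addrA -[j.+1%:R]natr1.
    move=> H; rewrite -[(k + j).+1]addn1 !natrD -mulrA; apply: H; [lra|lra|lra|by rewrite ler0n|by rewrite -natr1 in hj1].
  rewrite addnS.
  have e2 : bp p n k * (2 * A - (j.+1 * j.+2)%:R) * A <=
            bp p n k * (2 * A - (j * j.+1)%:R) * (A - j.+1%:R).
    rewrite -[X in X <= _]mulrA -[X in _ <= X]mulrA; apply: ler_wpM2l; first exact: (bge _ p01).
    pose J : R := j%:R.
    have -> : ((j.+1 * j.+2)%:R : R) = (J + 1) * (J + 2).
      by rewrite /J natrM -[j.+2]addn2 -[j.+1]addn1 !natrD.
    have -> : ((j * j.+1)%:R : R) = J * (J + 1).
      by rewrite /J natrM -[j.+1]addn1 !natrD.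
    rewrite -[j.+1]addn1 natrD -/J.
    have J0 : 0 <= J by rewrite ler0n.
    rewrite -subr_ge0.
    have -> : (2 * A - J * (J + 1)) * (A - (J + 1)) - (2 * A - (J + 1) * (J + 2)) * A
       = J * (J + 1) * (J + 1) by ring.
    by apply: mulr_ge0; [apply: mulr_ge0|]; lra.
  rewrite -(ler_pM2r A0).
  apply: (le_trans e2).
  have hAj : 0 <= A - j.+1%:R by lra.
  apply: le_trans (ler_wpM2r hAj IH) _.
  have A2 : 0 <= 2 * A by lra.
  have := ler_wpM2l A2 step.
  have -> : bp p n (k + j) * (2 * A) * (A - j.+1%:R) = 2 * A * (bp p n (k + j) * (A - j.+1%:R)) by ring.
  have -> : bp p n (k + j).+1 * (2 * A) * A = 2 * A * (bp p n (k + j).+1 * A) by ring.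
  done.
have half : forall j, (j <= w)%N -> bp p n k / 2 <= bp p n (k + j).
  move=> j hj; have := claim j hj.
  have hjA : (j * j.+1)%:R <= A.
    apply: le_trans hww; rewrite ler_nat; apply: leq_mul => //.
  have bk := bge k p01.
  have : bp p n k * A <= bp p n k * (2 * A - (j * j.+1)%:R).
    apply: ler_wpM2l => //; lra.
  move=> h1 h2; have h3 := le_trans h1 h2.
  have : bp p n k * A <= (2 * bp p n (k + j)) * A 
    by have -> : 2 * bp p n (k + j) * A = bp p n (k + j) * (2 * A) by ring.
  rewrite (ler_pM2r A0) => h4; lra.
have hkw : (k + w.+1 <= n)%N.
  rewrite -(ler_nat R) natrD.
  move: hk hw1; rewrite -[n%:R in X in _ -> _ -> X]mulr1 -{3}(addrNK p 1) mulrDr.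
  lra.
have sum1 : \sum_(0 <= j < w.+1) bp p n (k + j) <= \sum_(0 <= i < n.+1) bp p n i.
  rewrite (big_cat_nat (leq0n k) (leq_trans (leq_addr _ _) (leq_trans hkw (leqnSn _)))) /=.
  rewrite (big_cat_nat (leq_addr (w.+1) k) (leq_trans hkw (leqnSn _))) /=.
  have e := @big_addn _ (0:R) +%R 0 (k + w.+1) k xpredT (bp p n); rewrite add0n addKn in e; rewrite e.
  have s1 : 0 <= \sum_(0 <= i < k) bp p n i by apply: sumr_ge0 => i _; exact: bge.
  have s2 : 0 <= \sum_(k + w.+1 <= i < n.+1) bp p n i by apply: sumr_ge0 => i _; exact: bge.
  have -> : \sum_(0 <= i < w.+1) bp p n (i + k) = \sum_(0 <= i < w.+1) bp p n (k + i).
    by apply: eq_bigr => i _; rewrite addnC.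
  lra.
rewrite !big_mkord bp_sum in sum1.
have sum2 : \sum_(j < w.+1) (bp p n k / 2) <= \sum_(j < w.+1) bp p n (k + j).
  by apply: ler_sum => j _; apply: half; rewrite -ltnS.
rewrite sumr_const card_ord -mulr_natr in sum2.
have := le_trans sum2 sum1.
have w0 : 0 < (w.+1)%:R :> R by rewrite ltr0n.
move=> h; rewrite ler_pdivlMr //.
have -> : bp p n k * w.+1%:R = bp p n k / 2 * w.+1%:R * 2 by field.
lra.
Qed.

Lemma bp_step p n k : 0 < p < 1 -> k.+1%:R <= n%:R * p ->
  bp p n k <= bp p n k.+1 * (k.+1%:R / (n%:R * p)).
Proof.
case/andP=> p0 p1 hk.
have p01 : 0 <= p <= 1 by apply/andP; split; lra.
have n0 : 0 < n%:R :> R.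
  rewrite lt0r ler0n andbT; apply/negP => /eqP e; move: hk; rewrite e mul0r.
  move=> h; have : (0:R) < k.+1%:R by rewrite ltr0n.
  lra.
have np0 : 0 < n%:R * p by apply: mulr_gt0.
have kn : (k < n)%N.
  rewrite -(ltr_nat R); apply: lt_le_trans (_ : k%:R < k.+1%:R) _; first by rewrite ltr_nat.
  apply: le_trans hk _; rewrite -[X in _ <= X]mulr1; apply: ler_wpM2l; lra.
have pos : 0 < (n - k)%:R * p by apply: mulr_gt0 => //; rewrite ltr0n subn_gt0.
rewrite -(ler_pM2r pos) -bp_rec //.
rewrite -[X in _ <= X]mulrA; apply: ler_wpM2l; first exact: bp_ge0.
rewrite natrB ?(ltnW kn) //.
have -> : k.+1%:R / (n%:R * p) * ((n%:R - k%:R) * p) = k.+1%:R * ((n%:R - k%:R) / n%:R).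
  by field; apply/andP; split; apply: lt0r_neq0.
apply: ler_wpM2l; first by rewrite ler0n.
rewrite ler_pdivlMr //.
have hk' : k%:R <= n%:R * p by apply: le_trans hk; rewrite ler_nat.
lra.
Qed.

Lemma bp_tail p n k D : 0 < p < 1 -> (k + D)%:R <= n%:R * p ->
  bp p n k <= bp p n (k + D) * expR (- (D%:R * (D%:R - 1)) / (2 * (n%:R * p))).
Proof.
move=> hp; elim: D k => [|D IH] k hk.
  by rewrite addn0 mul0r oppr0 mul0r expR0 mulr1.
have hk1 : k.+1%:R <= n%:R * p.
  by apply: le_trans hk; rewrite ler_nat addnS ltnS leq_addr.
have np0 : 0 < n%:R * p.
  apply: lt_le_trans hk1; by rewrite ltr0n.
have p01 : 0 <= p <= 1 by case/andP: hp => ? ?; apply/andP; split; lra.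
apply: le_trans (bp_step hp hk1) _.
have IH' := IH k.+1 (ltac:(by rewrite addSn -addnS)).
rewrite addSn -addnS in IH'.
have f0 : 0 <= k.+1%:R / (n%:R * p) by apply: divr_ge0; [rewrite ler0n|exact: ltW].
apply: le_trans (ler_wpM2r f0 IH') _.
rewrite -mulrA; apply: ler_wpM2l; first exact: bp_ge0.
apply: le_trans (ler_wpM2l (expR_ge0 _) (_ : _ <= expR (k.+1%:R / (n%:R * p) - 1))) _.
  by have := expR_ge1Dx (k.+1%:R / (n%:R * p) - 1); rewrite addrC subrK.
rewrite -expRD ler_expR.
set a := n%:R * p.
have ha : a != 0 by apply: lt0r_neq0.
rewrite -subr_ge0.
have -> : - (D.+1%:R * (D.+1%:R - 1)) / (2 * a) -
    (- (D%:R * (D%:R - 1)) / (2 * a) + (k.+1%:R / a - 1)) = (a - (k + D.+1)%:R) / a.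
  rewrite -[D.+1]addn1 -[k.+1]addn1 !natrD; field.
  by [].
apply: divr_ge0; first by rewrite subr_ge0.
exact: ltW.
Qed.

Lemma bp_max p n w k : 0 < p < 1 ->
  (w.+1)%:R <= n%:R * (1-p) -> (w.+1)%:R <= n%:R * p ->
  (w * w.+1)%:R <= n%:R * p * (1-p) -> bp p n k <= 2 / w.+1%:R.
Proof.
move=> hp h1 h2 h3.
have c0 : 0 <= 2 / w.+1%:R :> R by apply: divr_ge0; rewrite ?ler0n //.
case: (ltnP n k) => hkn; first by rewrite bp_small.
case: (lerP k%:R (n%:R * p)) => hk; first exact: bp_window.
rewrite bp_sym //.
have hp' : 0 < 1 - p < 1 by case/andP: hp => ? ?; apply/andP; split; lra.
have e : 1 - (1 - p) = p by ring.
apply: bp_window => //; rewrite ?e //.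
  rewrite natrB //; lra.
by rewrite mulrAC.
Qed.

Lemma DD_ge0 (D : nat) : 0 <= D%:R * (D%:R - 1) :> R.
Proof.
case: D => [|D]; first by rewrite mul0r.
apply: mulr_ge0; first by rewrite ler0n.
by rewrite subr_ge0 ler1n.
Qed.

Lemma exp_mono_n (x a n : R) : 0 <= x -> 0 < a -> a <= n ->
  expR (- x / (2 * a)) <= expR (- x / (2 * n)).
Proof.
move=> x0 a0 an; rewrite ler_expR.
have n0 : 0 < n by apply: lt_le_trans an.
rewrite !mulNr lerN2.
have -> : x / (2 * n) = x / (2 * a) * (a / n) by field; apply/andP; split; apply: lt0r_neq0.
rewrite -[X in _ <= X]mulr1; apply: ler_wpM2l.
  by apply: divr_ge0 => //; apply: mulr_ge0; lra.
by rewrite ler_pdivrMr // mul1r.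
Qed.

Lemma bp_bound p n k w D : 0 < p < 1 ->
  (w.+1)%:R <= n%:R * (1-p) -> (w.+1)%:R <= n%:R * p ->
  (w * w.+1)%:R <= n%:R * p * (1-p) ->
  ((k + D)%:R <= n%:R * p \/ n%:R * p + D%:R <= k%:R) ->
  bp p n k <= 2 / w.+1%:R * expR (- (D%:R * (D%:R - 1)) / (2 * n%:R)).
Proof.
move=> hp h1 h2 h3 hD.
have p01 : 0 <= p <= 1 by case/andP: hp => ? ?; apply/andP; split; lra.
have hp' : 0 < 1 - p < 1 by case/andP: hp => ? ?; apply/andP; split; lra.
have e : 1 - (1 - p) = p by ring.
have n0 : 0 < n%:R :> R.
  have : (0:R) < w.+1%:R by rewrite ltr0n.
  move=> h; have := lt_le_trans h h2; case/andP: hp => ? ?.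
  by rewrite pmulr_lgt0.
case: hD => hD.
  apply: le_trans (bp_tail hp hD) _.
  apply: ler_pM.
  - exact: bp_ge0.
  - exact: expR_ge0.
  - exact: bp_max.
  apply: exp_mono_n; [exact: DD_ge0 | by apply: mulr_gt0; case/andP: hp |].
  by rewrite -[X in _ <= X]mulr1; apply: ler_wpM2l; [exact: ltW | case/andP: p01].
case: (ltnP n k) => hkn.
  by rewrite bp_small //; apply: mulr_ge0; [apply: divr_ge0; rewrite ?ler0n | exact: expR_ge0].
rewrite bp_sym //.
have hD' : (n - k + D)%:R <= n%:R * (1 - p) by rewrite natrD natrB //; lra.
apply: le_trans (bp_tail hp' hD') _.
apply: ler_pM.
- by apply: bp_ge0; case/andP: hp => ? ?; apply/andP; split; lra.
- exact: expR_ge0.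
- apply: bp_max; rewrite ?e //; by rewrite mulrAC.
apply: exp_mono_n; [exact: DD_ge0 | by apply: mulr_gt0; case/andP: hp' |].
by rewrite -[X in _ <= X]mulr1; apply: ler_wpM2l; [exact: ltW | lra].
Qed.

Lemma alg (u : R) (d Nn m : nat) : 1 < u -> (0 < d)%N ->
  (u/(u-1)) ^ ((d%:Z * Nn%:Z) - (Nn + m)%N%:Z) * (u^+d / (u-1)^+d.-1) ^ (- Nn%:Z)
  = (1/u)^+Nn * (1 - 1/u)^+m.
Proof.
move=> u1 d0.
have u0 : u != 0 by apply: lt0r_neq0; lra.
have v0 : u - 1 != 0 by apply: lt0r_neq0; lra.
rewrite expfzDr; last by apply: mulf_neq0 => //; rewrite invr_eq0.
rewrite -PoszM -!exprnN -!exprnP.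
case: d d0 => // d _ /=.
rewrite !exprMn !exprVn !exprD -!exprM mulnC !exprM exprS.
have -> : 1 - 1 / u = (u - 1) / u by field.
rewrite exprMn exprVn.
set a := u ^+ Nn; set b := (u - 1) ^+ Nn; set c := (u - 1) ^+ m; set e := u ^+ m.
have a0 : a != 0 by rewrite expf_neq0.
have b0 : b != 0 by rewrite expf_neq0.
have e0 : e != 0 by rewrite expf_neq0.
have ad0 : a ^+ d != 0 by rewrite expf_neq0.
have bd0 : b ^+ d != 0 by rewrite expf_neq0.
rewrite -exprAC -/a -[(u - 1) ^+ d ^+ Nn]exprAC -/b.
rewrite [(_ ^+ m) ^-1]/= .
rewrite expr1n -/e.
field.
have c0 : c != 0 by rewrite expf_neq0.
by rewrite a0 b0 e0 ad0 bd0 c0.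
Qed.

Lemma floor_bnd (x : R) : x - 1 < (Num.floor x)%:~R <= x.
Proof.
apply/andP; split; last exact: floor_le.
have := floorD1_gt x; rewrite intrD; lra.
Qed.

End B.


Section C.
Variable R : realType.


Lemma step4 (γ σ : R) : 0 < γ -> - (γ * σ ^+ 2) <= 1 / (4 * γ) - `|σ|.
Proof.
move=> g0.
rewrite -subr_ge0.
have e : σ^+2 = `|σ|^+2 by rewrite real_normK ?num_real.
rewrite e.
have -> : 1 / (4 * γ) - `|σ| - - (γ * `|σ| ^+ 2) = (2 * γ * `|σ| - 1) ^+ 2 / (4 * γ).
  by field; lra.
apply: divr_ge0; first exact: sqr_ge0.
lra.
Qed.

Lemma tailE (u k τ c1 σ pp : R) (Xn N' D : nat) :
  let γ := k^+2/(16 * u^+2 * c1) in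
  let Q := c1 * τ^+2 in
  2 <= u -> 0 < k -> 1 <= τ -> 0 < c1 -> pp = 1 / u ->
  8*u/(k*`|σ|) <= τ ->
  Q / 2 <= Xn%:R <= 2 * Q ->
  Q + k * σ * τ - 1 < Xn%:R < Q + k * σ * τ + 1 ->
  Q / u - 1 < N'%:R < Q / u + 1 ->
  D%:R <= `|Xn%:R * pp - N'%:R| < D.+1%:R ->
  expR (- (D%:R * (D%:R - 1)) / (2 * Xn%:R)) <= expR (1 / (4 * γ)) * expR (- `|σ|).
Proof.
move=> γ Q u2 k0 τ1 c10 epp hτ4 /andP[hXlo hXhi] /andP[hX1 hX2] /andP[hN1 hN2] /andP[hD1 hD2].
have Q0 : 0 < Q by rewrite /Q; apply: mulr_gt0 => //; apply: exprn_gt0; lra.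
set δ := Xn%:R * pp - N'%:R in hD1 hD2.
have hdiv : forall x a b : R, 0 <= x -> 0 < b -> b <= a -> x / a <= x / b.
  move=> x a b x0 b0 ba; apply: ler_wpM2l => //.
  rewrite lef_pV2 ?posrE //; exact: lt_le_trans ba.
have γ0 : 0 < γ.
  rewrite /γ; apply: divr_gt0; first exact: exprn_gt0.
  by apply: mulr_gt0 => //; apply: mulr_gt0; [lra| apply: exprn_gt0; lra].
have Xn0 : 0 < 2 * Xn%:R :> R by lra.
rewrite -expRD ler_expR mulNr.
have DD0 : 0 <= D%:R * (D%:R - 1) / (2 * Xn%:R) :> R.
  apply: mulr_ge0; first exact: DD_ge0.
  rewrite invr_ge0; lra.
case: (eqVneq σ 0) => hσ.
  rewrite hσ normr0 oppr0 addr0.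
  have : 0 <= 1 / (4 * γ) by apply: divr_ge0; lra.
  lra.
have sp : 0 < `|σ| by rewrite normr_gt0.
have h8 := hτ4; rewrite ler_pdivrMr in h8; last by apply: mulr_gt0.
have u0 : 0 < u by lra.
have huN : Q - u < u * N'%:R < Q + u.
  have e : u * (Q / u) = Q by field; lra.
  apply/andP; split.
    have := ltr_pM2l u0 (Q / u - 1) N'%:R; rewrite hN1 mulrBr e mulr1 => h; by rewrite h.
  have := ltr_pM2l u0 N'%:R (Q / u + 1); rewrite hN2 mulrDr e mulr1 => h; by rewrite h.
case/andP: huN => huN1 huN2.
pose δ' := Xn%:R - u * N'%:R.
have eδ : `|δ| = `|δ'| / u.
  have -> : δ = δ' / u by rewrite /δ /δ' epp; field; lra.
  by rewrite normrM normfV (gtr0_norm u0).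
have hd' : `|δ'| < u * D.+1%:R.
  by rewrite eδ ltr_pdivrMr // mulrC in hD2.
have hA : δ' <= `|δ'| by exact: ler_norm.
have hB : - δ' <= `|δ'| by rewrite -normrN; exact: ler_norm.
have hks' : k * σ * τ = k * `|σ| * τ \/ k * σ * τ = - (k * `|σ| * τ).
  case: (lerP 0 σ) => h; [left; rewrite ger0_norm // | right; rewrite ltr0_norm //; ring].
have hL : k * `|σ| * τ / 2 <= u * (D%:R - 1).
  rewrite -natr1 mulrDr mulr1 in hd'.
  rewrite mulrBr mulr1.
  rewrite /δ' -/Q in hA hB hX1 hX2.
  case: hks' => hk; lra.
pose L := k * `|σ| * τ / (2 * u).
have hL' : L <= D%:R - 1.
  rewrite /L ler_pdivrMr; last lra.
  have -> : (D%:R - 1) * (2 * u) = 2 * (u * (D%:R - 1)) by ring.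
  have -> : k * `|σ| * τ = 2 * (k * `|σ| * τ / 2) by field.
  lra.
have L4 : 4 <= L.
  rewrite /L ler_pdivlMr; last lra.
  lra.
have hLL : L * L <= D%:R * (D%:R - 1).
  by apply: ler_pM; lra.
have eL : L * L / (4 * Q) = γ * σ ^+ 2.
  have e : σ^+2 = `|σ|^+2 by rewrite real_normK ?num_real.
  rewrite e /L /Q /γ; field.
  by apply/and3P; split; apply: lt0r_neq0; lra.
have s4 := step4 σ γ0.
have cc1 : L * L / (4 * Q) <= L * L / (2 * Xn%:R).
  by apply: hdiv; [apply: mulr_ge0; lra | lra | lra].
have c2 : L * L / (2 * Xn%:R) <= D%:R * (D%:R - 1) / (2 * Xn%:R).
  by apply: ler_wpM2r; [rewrite invr_ge0; lra | exact: hLL].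
rewrite eL in cc1.
lra.
Qed.

End C.


Section C.
Variable R : realType.

Lemma core (u k τ β c1 σ : R) (Nn m : nat) :
  let pp := 1 / u in
  let γ := k^+2/(16 * u^+2 * c1) in
  2 <= u -> 0 < k -> 1 <= τ -> 0 < c1 -> 0 < β ->
  β^+2 = c1 * pp * (1-pp) / 8 ->
  (2*k*`|σ|+4)/c1 <= τ -> 1/β <= τ -> 4*β/(c1*pp) <= τ -> 8*u/(k*`|σ|) <= τ ->
  c1 * τ^+2 + k * σ * τ - 1 < (Nn.+1 + m)%:R < c1 * τ^+2 + k * σ * τ + 1 ->
  c1 * τ^+2 / u - 1 < Nn.+1%:R < c1 * τ^+2 / u + 1 ->
  k * τ * ((1 / u) ^+ Nn.+1 * (1 - 1 / u) ^+ m) * 'C(Nn + m, Nn)%:R <=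
  2 * k / β * expR (1 / (4 * γ)) * expR (- `|σ|).
Proof.
move=> pp γ u2 k0 τ1 c10 β0 βsq hτ1 hτ2 hτ3 hτ4 /andP[hX1 hX2] /andP[hN1 hN2].
have hC : ('C(Nn + m, Nn) <= 'C(Nn.+1 + m, Nn.+1))%N.
  have := mul_bin_diag (Nn.+1 + m) Nn; rewrite addSn /= => e.
  rewrite -(@leq_pmul2l (Nn + m).+1) // e.
  by apply: leq_mul => //; rewrite ltnS leq_addr.
have ebp : (1/u)^+Nn.+1 * (1-1/u)^+m * 'C(Nn.+1+m, Nn.+1)%:R = bp pp (Nn.+1+m) Nn.+1.
  by rewrite /bp addKn /pp; ring.
have kτ0 : 0 <= k * τ by apply: mulr_ge0; lra.
have pp0 : 0 < pp by rewrite /pp; apply: divr_gt0; lra.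
have pp1 : pp <= 1/2 by rewrite /pp ler_pdivrMr; lra.
apply: (@le_trans _ _ (k * τ * bp pp (Nn.+1+m) Nn.+1)).
  have u0 : 0 <= 1 / u by apply: divr_ge0; lra.
  have u1 : 0 <= 1 - 1 / u by have := pp1; rewrite /pp; lra.
  rewrite -ebp -!mulrA.
  apply: ler_wpM2l; [lra|].
  apply: ler_wpM2l; [lra|].
  apply: ler_wpM2l; [exact: exprn_ge0|].
  apply: ler_wpM2l; [exact: exprn_ge0|].
  by rewrite ler_nat.
set Xn := (Nn.+1 + m)%N in hX1 hX2 *.
set N' := Nn.+1 in hN1 hN2 *.
pose Q := c1 * τ^+2.
have τ0 : 0 <= τ by lra.
have Q0 : 0 < Q by rewrite /Q; apply: mulr_gt0 => //; apply: exprn_gt0; lra.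
have s0 : 0 <= `|σ| by [].
have hsig : k * `|σ| * τ + 2 <= Q / 2.
  have a := hτ1; rewrite ler_pdivrMr // [X in _ <= X]mulrC in a.
  have b : (2 * k * `|σ| + 4) * τ <= c1 * τ * τ by apply: ler_wpM2r.
  have -> : Q = c1 * τ * τ by rewrite /Q; field.
  lra.
have hks : - (k * `|σ| * τ) <= k * σ * τ <= k * `|σ| * τ.
  have kt : 0 <= k * τ by apply: mulr_ge0; lra.
  have e1 : k * σ * τ = k * τ * σ by ring.
  have e2 : k * `|σ| * τ = k * τ * `|σ| by ring.
  rewrite e1 e2 -mulrN; apply/andP; split; apply: ler_wpM2l => //.
    by rewrite lerNl; apply: (le_trans (ler_norm _)); rewrite normrN.
  exact: ler_norm.
case/andP: hks => hks1 hks2.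
have hXlo : Q / 2 <= Xn%:R by rewrite -/Q in hX1; lra.
have hXhi : Xn%:R <= 2 * Q by rewrite -/Q in hX2; lra.
have βτ1 := hτ2; rewrite ler_pdivrMr // [X in _ <= X]mulrC in βτ1.
pose w := Num.trunc (β * τ).
have /andP[hw1 hw2] : w%:R <= β * τ < w.+1%:R by apply: truncn_itv; lra.
have hw3 : w.+1%:R <= 2 * β * τ by rewrite -natr1; lra.
have hβ := hτ3; rewrite ler_pdivrMr in hβ; last by apply: mulr_gt0.
rewrite [X in _ <= X]mulrC in hβ.
have hXp : 2 * β * τ <= Xn%:R * pp.
  have a : Q / 2 * pp <= Xn%:R * pp by apply: ler_wpM2r => //; lra.
  have b : 4 * β * τ <= c1 * pp * τ * τ by apply: ler_wpM2r.
  have e : Q / 2 * pp = c1 * pp * τ * τ / 2 by rewrite /Q; field.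
  rewrite e in a.
  lra.
have h2 : w.+1%:R <= Xn%:R * pp by lra.
have h1 : w.+1%:R <= Xn%:R * (1 - pp).
  apply: (le_trans h2); apply: ler_wpM2l; [by rewrite ler0n | lra].
have h3 : (w * w.+1)%:R <= Xn%:R * pp * (1 - pp).
  have a : (w * w.+1)%:R <= w.+1%:R * w.+1%:R :> R.
    by rewrite -natrM ler_nat leq_mul.
  have b : w.+1%:R * w.+1%:R <= (2 * β * τ) * (2 * β * τ) :> R.
    by apply: ler_pM => //; rewrite ler0n.
  have e : (2 * β * τ) * (2 * β * τ) = 4 * β ^+ 2 * τ ^+ 2 by ring.
  rewrite e in b.
  rewrite βsq in b.
  have c : Q / 2 * (pp * (1 - pp)) <= Xn%:R * (pp * (1 - pp)).
    by apply: ler_wpM2r => //; apply: mulr_ge0; lra.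
  have e2 : 4 * (c1 * pp * (1 - pp) / 8) * τ ^+ 2 = Q / 2 * (pp * (1 - pp)) by rewrite /Q; field.
  rewrite e2 in b.
  rewrite -mulrA; lra.
pose δ := Xn%:R * pp - N'%:R.
pose D := Num.trunc `|δ|.
have /andP[hD1 hD2] : D%:R <= `|δ| < D.+1%:R by apply: truncn_itv.
have hpp : 0 < pp < 1 by apply/andP; split; lra.
have hDc : (N' + D)%:R <= Xn%:R * pp \/ Xn%:R * pp + D%:R <= N'%:R.
  case: (lerP 0 δ) => hδ.
    by left; rewrite natrD; rewrite ger0_norm // in hD1; rewrite /δ in hD1; lra.
  by right; rewrite ltr0_norm // in hD1; rewrite /δ in hD1; lra.
have bb := bp_bound hpp h1 h2 h3 hDc.
set E := expR _ in bb.
have E0 : 0 <= E by exact: expR_ge0.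
have w0 : 0 < w.+1%:R :> R by rewrite ltr0n.
apply: (@le_trans _ _ (k * τ * (2 / w.+1%:R * E))).
  by apply: ler_wpM2l.
have kb : k * τ * (2 / w.+1%:R) <= 2 * k / β.
  rewrite ler_pdivlMr //.
  have -> : k * τ * (2 / w.+1%:R) * β = (2 * k) * ((β * τ) / w.+1%:R).
    have w0' := lt0r_neq0 w0; have β0' := lt0r_neq0 β0.
    by field; rewrite addrC natr1 pnatr_eq0.
  rewrite -[X in _ <= X]mulr1; apply: ler_wpM2l; first lra.
  rewrite ler_pdivrMr // mul1r; lra.
rewrite mulrA -[X in _ <= X]mulrA.
apply: ler_pM => //; first by apply: mulr_ge0 => //; apply: divr_ge0 => //; rewrite ler0n.
rewrite /E; apply: (tailE (u:=u) (k:=k) (τ:=τ) (c1:=c1) (σ:=σ) (pp:=pp) (Xn:=Xn) (N':=N') (D:=D)) => //.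
all: by apply/andP; split.
Qed.

End C.


Unset Implicit Arguments.
Set Strict Implicit.

Theorem proposition5p5 (R : realType) (p : R) (d : nat) (r1 r2 : R) :
  0 < p < 1 -> (2 <= d)%N -> 0 < r2 - r1 ->
  exists C1 : R, forall s1 s2 : R, exists T : R, forall t : R, T <= t ->
    let dR := d%:R : R in
    let x1 := xi p dR r1 s1 t in
    let x2 := xi p dR r2 s2 t in
    let n1 := ni p dR r1 t in
    let n2 := ni p dR r2 t in
    kappa p dR * powR t (1 / 3)
      * (dR / (dR - 1)) ^ (x2 + d%:Z * n2 - (x1 + d%:Z * n1))
      * (dR ^+ d / (dR - 1) ^+ d.-1) ^ (n1 - n2)
      * (binz (x1 - x2 - 1) (n2 - n1 - 1))%:R
    <= C1 * expR (- `|s2 - s1|).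
Proof.
move=> /andP[p0 p1] hd hr.
have dR2 : (2:R) <= d%:R by rewrite ler_nat.
set u := d%:R : R.
pose k := kappa p u.
have k0 : 0 < k.
  rewrite /k /kappa; apply: divr_gt0; last by lra.
  apply: mulr_gt0; apply: powR_gt0; first by apply: mulr_gt0 => //; apply: mulr_gt0; lra.
  by apply: mulr_gt0; lra.
pose c1 := k^+2 * (2/(u-1)) * (r2-r1).
have c10 : 0 < c1.
  by rewrite /c1; apply: mulr_gt0 => //; apply: mulr_gt0; [exact: exprn_gt0| apply: divr_gt0; lra].
pose pp := 1/u.
have pp0 : 0 < pp by rewrite /pp; apply: divr_gt0; lra.
have pp1 : pp <= 1/2 by rewrite /pp ler_pdivrMr; lra.
pose β := Num.sqrt (c1 * pp * (1-pp) / 8).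
have β0 : 0 < β.
  rewrite /β sqrtr_gt0; apply: divr_gt0; last by lra.
  by apply: mulr_gt0; [apply: mulr_gt0|lra].
have βsq : β^+2 = c1 * pp * (1-pp) / 8.
  by rewrite /β sqr_sqrtr // ltW // -sqrtr_gt0.
pose γ := k^+2/(16 * u^+2 * c1).
have γ0 : 0 < γ.
  rewrite /γ; apply: divr_gt0; first exact: exprn_gt0.
  by apply: mulr_gt0 => //; apply: mulr_gt0; [lra| apply: exprn_gt0; lra].
pose K := expR (1/(4*γ)).
exists (2*k/β*K).
move=> s1 s2.
pose σ := s2 - s1.
pose τ0 := 1 + (2*k*`|σ|+4)/c1 + 1/β + 4*β/(c1*pp) + 8*u/(k*`|σ|).
have σ0 : 0 <= `|σ| by [].
have h1 : 0 <= (2*k*`|σ|+4)/c1 by apply: divr_ge0; [apply: addr_ge0; [apply: mulr_ge0 => //; lra|lra]|lra].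
have h2 : 0 <= 1/β by apply: divr_ge0; lra.
have h3 : 0 <= 4*β/(c1*pp) by apply: divr_ge0; [lra| apply: mulr_ge0; lra].
have h4 : 0 <= 8*u/(k*`|σ|) by apply: divr_ge0; [lra| apply: mulr_ge0 => //; lra].
have τ01 : 1 <= τ0 by rewrite /τ0; lra.
exists (τ0^+3) => t Ht.
cbv zeta.
have t1 : 1 <= t by apply: le_trans Ht; exact: exprn_ege1.
pose τ := t `^ (1/3).
have τge : τ0 <= τ.
  have τ00 : 0 <= τ0 by lra.
  have h : (τ0^+3) `^ (1/3) <= t `^ (1/3).
    apply: ge0_ler_powR => //; rewrite ?nnegrE //; [lra | exact: exprn_ge0 | lra].
  rewrite -powR_mulrn in h; last by lra.
  rewrite -powRrM in h.
  have e : (3%:R : R) * (1/3) = 1 by lra.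
  by rewrite e powRr1 in h.
have e23 : t `^ (2/3) = τ^+2.
  rewrite /τ -powR_mulrn ?powR_ge0 // -powRrM.
  by congr (_ `^ _); lra.
have τ1 : 1 <= τ by lra.
rewrite /xi /ni e23 -/τ -/k.
have fx1 := floor_bnd (- k ^+ 2 * (2 / (u - 1)) * r1 * τ ^+ 2 - k * s1 * τ).
have fx2 := floor_bnd (- k ^+ 2 * (2 / (u - 1)) * r2 * τ ^+ 2 - k * s2 * τ).
have fn1 := floor_bnd (p * (u - 1) / (u * (u - p)) * t + k ^+ 2 * (2 / (u * (u - 1))) * r1 * τ ^+ 2).
have fn2 := floor_bnd (p * (u - 1) / (u * (u - p)) * t + k ^+ 2 * (2 / (u * (u - 1))) * r2 * τ ^+ 2).
set x1 := Num.floor (- k ^+ 2 * (2 / (u - 1)) * r1 * τ ^+ 2 - k * s1 * τ) in fx1 *.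
set x2 := Num.floor (- k ^+ 2 * (2 / (u - 1)) * r2 * τ ^+ 2 - k * s2 * τ) in fx2 *.
set n1 := Num.floor (p * (u - 1) / (u * (u - p)) * t + k ^+ 2 * (2 / (u * (u - 1))) * r1 * τ ^+ 2) in fn1 *.
set n2 := Num.floor (p * (u - 1) / (u * (u - p)) * t + k ^+ 2 * (2 / (u * (u - 1))) * r2 * τ ^+ 2) in fn2 *.
have eA : (- k ^+ 2 * (2 / (u - 1)) * r1 * τ ^+ 2 - k * s1 * τ) -
    (- k ^+ 2 * (2 / (u - 1)) * r2 * τ ^+ 2 - k * s2 * τ) = c1 * τ^+2 + k * σ * τ.
  by rewrite /c1 /σ; ring.
have eB : (p * (u - 1) / (u * (u - p)) * t + k ^+ 2 * (2 / (u * (u - 1))) * r2 * τ ^+ 2) -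
   (p * (u - 1) / (u * (u - p)) * t + k ^+ 2 * (2 / (u * (u - 1))) * r1 * τ ^+ 2) = c1 * τ^+2 / u.
  rewrite /c1; field.
  by rewrite -/u; apply/and3P; split; apply: lt0r_neq0; lra.
have hX : c1 * τ^+2 + k * σ * τ - 1 < (x1 - x2)%:~R < c1 * τ^+2 + k * σ * τ + 1.
  rewrite intrB; apply/andP; split; lra.
have hN : c1 * τ^+2 / u - 1 < (n2 - n1)%:~R < c1 * τ^+2 / u + 1.
  rewrite intrB; apply/andP; split; lra.
rewrite /binz; case: ifP => hb; last first.
  rewrite mulr0; apply: mulr_ge0; last exact: expR_ge0.
  apply: mulr_ge0; last by rewrite /K; exact: expR_ge0.
  by apply: divr_ge0; lra.
clear fx1 fx2 fn1 fn2 eA eB.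
move/andP: hb => [hb1 hb2].
have eN : n2 - n1 = (`|(n2 - n1 - 1)%R|%N).+1%:Z.
  by rewrite -addn1 PoszD gez0_abs //; exact: (esym (subrK _ _)).
set Nn := `|(n2 - n1 - 1)%R|%N in eN *.
have hm0 : 0 <= (x1 - x2) - (n2 - n1).
  by move: hb2; rewrite lerD2r subr_ge0.
have eX : x1 - x2 = (Nn.+1 + `|(x1 - x2 - (n2 - n1))%R|%N)%N%:Z.
  by rewrite PoszD gez0_abs // -eN; ring.
set m := `|(x1 - x2 - (n2 - n1))%R|%N in eX.
have ez1 : x2 + d%:Z * n2 - (x1 + d%:Z * n1) = d%:Z * Nn.+1%:Z - (Nn.+1 + m)%N%:Z.
  rewrite -eX -eN; ring.
have ez2 : n1 - n2 = - Nn.+1%:Z by rewrite -eN opprB.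
have eC : `|(x1 - x2 - 1)%R|%N = (Nn + m)%N by rewrite eX addSn -addn1 PoszD addrK.
rewrite ez1 ez2 eC -(mulrA (k * τ)) alg; last by apply: leq_trans hd.
  2: lra.
rewrite eX in hX.
rewrite eN in hN.
have hτ1 : (2*k*`|σ|+4)/c1 <= τ by rewrite /τ0 in τge; lra.
have hτ2 : 1/β <= τ by rewrite /τ0 in τge; lra.
have hτ3 : 4*β/(c1*pp) <= τ by rewrite /τ0 in τge; lra.
have hτ4 : 8*u/(k*`|σ|) <= τ by rewrite /τ0 in τge; lra.
exact: (core (Nn := Nn) (m := m) dR2 k0 τ1 c10 β0 βsq hτ1 hτ2 hτ3 hτ4 hX hN).
Qed.
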